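(* Fix $\gamma>0$. Let $\{\psi^t\}$ be any feasible family and $|V^0| = \max_{t\in\mathcal{T}}|V^t|$. Define the simultaneously updated potentials $$\hat\psi^t_i(l) = \psi^t_i(l) - \frac{1}{|V^0|}\Big(\nu^t_i(l) - \tfrac{1}{|\mathcal{T}(i)|}\sum_{\bar t\in\mathcal{T}(i)}\nu^{\bar t}_i(l)\Big), \qquad \forall i\in V,\ t\in\mathcal{T}(i),\ l\in\mathcal{L},$$ with all smoothed max-marginals computed from the pre-update potentials. Then $\{\hat\psi^t\}$ is feasible and $D_\gamma(\{\hat\psi^t\}) \le D_\gamma(\{\psi^t\})$.
   Context: Let $G=(V,E)$ be a finite graph and $\mathcal{L}=\{1,\dots,L\}$ a finite label set. Unary scores $\psi_i \in \mathbb{R}^{\mathcal{L}}$ ($i \in V$) and pairwise scores $\phi_{ij} \in \mathbb{R}^{\mathcal{L}\times\mathcal{L}}$ ($ij \in E$) are given. Let $\mathcal{T}$ be a finite collection of trees (sub-problems), each tree $t$ being a subgraph of $G$ with vertex set $V^t$ and edge set $E^t \subseteq E$, such that every vertex of $V$ lies in at least one tree and every edge of $E$ lies in exactly one tree. Write $\mathcal{T}(i) = \{t \in \mathcal{T} : i \in V^t\}$. Each sub-problem $t$ carries unary potentials $\psi^t_i \in \mathbb{R}^{\mathcal{L}}$ for $i \in V^t$; the family $\{\psi^t\}$ is called feasible if $\sum_{t \in \mathcal{T}(i)} \psi^t_i = \psi_i$ for every $i \in V$. For a labeling $x : V^t \to \mathcal{L}$ define the tree energy $E^t(x) = \sum_{i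 \in V^t} \psi^t_i(x_i) + \sum_{ij \in E^t} \phi_{ij}(x_i,x_j)$. For a parameter $\gamma>0$, the smoothed max-energy of sub-problem $t$ is $\nu^t = \gamma \log \sum_{x : V^t\to\mathcal{L}} \exp(E^t(x)/\gamma)$, and for $i\in V^t$, $l\in\mathcal{L}$ the smoothed max-marginal is $\nu^t_i(l) = \gamma\log\sum_{x:V^t\to\mathcal{L},\ x_i=l}\exp(E^t(x)/\gamma)$. The smoothed dual objective is $D_\gamma(\{\psi^t\}) = \sum_{t \in \mathcal{T}} \nu^t$. *)

(* Defs.v *)
From mathcomp Require Import all_boot.
From Stdlib Require Import Reals.

Set Implicit Arguments.
Unset Strict Implicit.
Unset Printing Implicit Defensive.

Local Open Scope R_scope.

Section Defs.

(* V : vertices; E : edges with endpoints src/dst (the pairwise score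
   phi e is phi_{ij} with i = src e, j = dst e); T : index type of the
   sub-problems (trees); labels are 'I_nL.+1, i.e. a set of nL+1 >= 1 labels. *)
Variables (V E T : finType) (src dst : E -> V) (nL : nat).
Variables (VT : T -> {set V}) (ET : T -> {set E}).

Definition Lab := 'I_nL.+1.

Definition tree_adj (t : T) : rel V :=
  fun u v => [exists e in ET t,
     ((src e == u) && (dst e == v)) || ((src e == v) && (dst e == u))].

Definition is_tree (t : T) : Prop :=
  [/\ leq 1 #|VT t|,
      #|ET t| = subn #|VT t| 1 &
      forall u v, u \in VT t -> v \in VT t -> connect (tree_adj t) u v].

Definition tree_decomposition : Prop :=
  [/\ forall t, is_tree t,
      forall t e, e \in ET t -> src e \in VT t /\ dst e \in VT t,
      forall i, exists t, i \in VT t &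
      forall e, exists! t, e \in ET t].

Definition Tof (i : V) : {set T} := [set t | i \in VT t].

(* labelings x : V^t -> Lab, represented as total functions V -> Lab that
   take the fixed value ord0 outside V^t (a bijective encoding). *)
Definition labeling_of (t : T) (x : {ffun V -> Lab}) : bool :=
  [forall i, (i \notin VT t) ==> (x i == ord0)].

Definition Rsum {I : finType} (P : pred I) (F : I -> R) : R :=
  \big[Rplus/0]_(i | P i) F i.

Variables (phi : E -> Lab -> Lab -> R).

Definition energy (psit : T -> V -> Lab -> R) (t : T) (x : {ffun V -> Lab}) : R :=
  \big[Rplus/0]_(i in VT t) psit t i (x i)
  + \big[Rplus/0]_(e in ET t) phi e (x (src e)) (x (dst e)).

Definition smax_energy (gamma : R) (psit : T -> V -> Lab -> R) (t : T) : R :=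
  gamma * ln (\big[Rplus/0]_(x | labeling_of t x) exp (energy psit t x / gamma)).

Definition smax_marginal (gamma : R) (psit : T -> V -> Lab -> R)
    (t : T) (i : V) (l : Lab) : R :=
  gamma * ln (\big[Rplus/0]_(x | labeling_of t x && (x i == l))
                 exp (energy psit t x / gamma)).

Definition dual_obj (gamma : R) (psit : T -> V -> Lab -> R) : R :=
  \big[Rplus/0]_(t : T) smax_energy gamma psit t.

Definition feasible (psi : V -> Lab -> R) (psit : T -> V -> Lab -> R) : Prop :=
  forall i l, \big[Rplus/0]_(t in Tof i) psit t i l = psi i l.

Definition V0size : nat := \max_(t : T) #|VT t|.

(* simultaneous update (values for i notin V^t are irrelevant) *)
Definition updated (gamma : R) (psit : T -> V -> Lab -> R) : T -> V -> Lab -> R :=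
  fun t i l =>
    psit t i l
    - / INR V0size *
      (smax_marginal gamma psit t i l
       - / INR #|Tof i| *
         \big[Rplus/0]_(tb in Tof i) smax_marginal gamma psit tb i l).

End Defs.

(* Main.v *)
Require Import Defs.
From HB Require Import structures.
From mathcomp Require Import all_boot.
From Stdlib Require Import Reals Lra.
Local Open Scope R_scope.
Set Implicit Arguments.
Unset Strict Implicit.

HB.instance Definition _ := Monoid.isComLaw.Build R 0 Rplus (fun a b c => esym (Rplus_assoc a b c)) Rplus_comm Rplus_0_l.
HB.instance Definition _ := Monoid.isMulLaw.Build R 0 Rmult Rmult_0_l Rmult_0_r.
HB.instance Definition _ := Monoid.isAddLaw.Build R Rmult Rplus Rmult_plus_distr_r Rmult_plus_distr_l.

Section Gen.
Variable I : finType.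

Lemma sumR_le (P : pred I) (F G : I -> R) :
  (forall i, P i -> F i <= G i) -> \big[Rplus/0]_(i | P i) F i <= \big[Rplus/0]_(i | P i) G i.
Proof. move=> H; apply: (big_ind2 (fun a b => a <= b)) => //; [lra| intros; lra]. Qed.

Lemma sumR_ge0 (P : pred I) (F : I -> R) :
  (forall i, P i -> 0 <= F i) -> 0 <= \big[Rplus/0]_(i | P i) F i.
Proof. move=> H; apply: (big_ind (fun a => 0 <= a)) => //; [lra| intros; lra]. Qed.

Lemma sumR_gt0 (P : pred I) (F : I -> R) i0 : P i0 ->
  (forall i, P i -> 0 < F i) -> 0 < \big[Rplus/0]_(i | P i) F i.
Proof.
move=> Pi0 H; rewrite (bigD1 i0) //=.
have := H i0 Pi0; have : 0 <= \big[Rplus/0]_(i | P i && (i != i0)) F i.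
  by apply: sumR_ge0 => i /andP[Pi _]; apply: Rlt_le; apply H.
lra.
Qed.

Lemma sumR_const (A : {pred I}) c : \big[Rplus/0]_(i in A) c = INR #|A| * c.
Proof.
rewrite big_const; elim: #|A| => [|n IH] /=; first lra.
rewrite IH; destruct n; simpl; lra.
Qed.

Lemma sumR_scal (P : pred I) a F : a * \big[Rplus/0]_(i | P i) F i = \big[Rplus/0]_(i | P i) (a * F i).
Proof. exact: big_distrr. Qed.

Lemma sumR_split (P : pred I) F G : \big[Rplus/0]_(i | P i) (F i + G i) = \big[Rplus/0]_(i | P i) F i + \big[Rplus/0]_(i | P i) G i.
Proof. exact: big_split. Qed.

End Gen.

Lemma sumR_opp (I : finType) (P : pred I) F : \big[Rplus/0]_(i | P i) (- F i) = - \big[Rplus/0]_(i | P i) F i.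
Proof. by rewrite (big_morph Ropp Ropp_plus_distr Ropp_0). Qed.

Lemma sumR_sub (I : finType) (P : pred I) F G : \big[Rplus/0]_(i | P i) (F i - G i) = \big[Rplus/0]_(i | P i) F i - \big[Rplus/0]_(i | P i) G i.
Proof. by rewrite /Rminus sumR_split sumR_opp. Qed.

Lemma ln_le_sub1 y : 0 < y -> ln y <= y - 1.
Proof. move=> y0; have := exp_ineq1_le (ln y); rewrite exp_ln //; lra. Qed.

Section Gibbs.
Variable X : finType.
Variable P : pred X.

Lemma gibbs_le (q f : X -> R) :
  (forall x, P x -> 0 < q x) -> \big[Rplus/0]_(x | P x) q x = 1 ->
  \big[Rplus/0]_(x | P x) (q x * (f x - ln (q x))) <= ln (\big[Rplus/0]_(x | P x) exp (f x)).
Proof.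
move=> qpos q1.
case: (pickP P) => [x0 Px0|P0]; last first.
  by move: q1; rewrite big_pred0 // => ?; lra.
set Z := \big[Rplus/0]_(x | P x) exp (f x).
have Zpos : 0 < Z by apply: (sumR_gt0 Px0) => x _; apply: exp_pos.
have key : forall x, P x -> q x * (f x - ln (q x)) - q x * ln Z <= exp (f x) * / Z - q x.
  move=> x Px; have qx := qpos x Px.
  have yp : 0 < exp (f x) * / (q x * Z).
    apply: Rmult_lt_0_compat; first exact: exp_pos.
    by apply: Rinv_0_lt_compat; apply: Rmult_lt_0_compat.
  have := ln_le_sub1 yp.
  have qZ : 0 < q x * Z by apply: Rmult_lt_0_compat.
  rewrite ln_mult; [|exact: exp_pos|exact: Rinv_0_lt_compat].
  rewrite ln_Rinv // ln_mult // ln_exp => H.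
  have H2 := Rmult_le_compat_l (q x) _ _ (Rlt_le _ _ qx) H.
  have -> : exp (f x) * / Z = q x * (exp (f x) * / (q x * Z)).
    field; lra.
  nra.
have := sumR_le key.
rewrite !sumR_sub -big_distrl /= q1 -big_distrl /= -/Z Rinv_r; [|lra].
lra.
Qed.

Lemma gibbs_eq (g : X -> R) (x0 : X) : P x0 ->
  let Z := \big[Rplus/0]_(x | P x) exp (g x) in
  \big[Rplus/0]_(x | P x) (exp (g x) / Z * (g x - ln (exp (g x) / Z))) = ln Z
  /\ (forall x, P x -> 0 < exp (g x) / Z)
  /\ \big[Rplus/0]_(x | P x) (exp (g x) / Z) = 1.
Proof.
move=> Px0 Z.
have Zpos : 0 < Z by apply: (sumR_gt0 Px0) => x _; apply: exp_pos.
have s1 : \big[Rplus/0]_(x | P x) (exp (g x) / Z) = 1.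
  by rewrite /Rdiv -big_distrl /= -/Z Rinv_r //; lra.
split; last split => //.
- transitivity (\big[Rplus/0]_(x | P x) (exp (g x) / Z * ln Z)).
    apply: eq_bigr => x _; rewrite /Rdiv ln_mult ?ln_Rinv ?ln_exp //; first ring.
    exact: exp_pos. by apply: Rinv_0_lt_compat.
  by rewrite -big_distrl /= s1 Rmult_1_l.
- move=> x _; apply: Rdiv_lt_0_compat => //; exact: exp_pos.
Qed.

Lemma jensen_lse (K : finType) (PK : pred K) (w : K -> R) (w0 : R)
   (f : K -> X -> R) (f0 : X -> R) (x0 : X) : P x0 ->
  (forall k, PK k -> 0 <= w k) -> 0 <= w0 ->
  \big[Rplus/0]_(k | PK k) w k + w0 = 1 ->
  ln (\big[Rplus/0]_(x | P x) exp (\big[Rplus/0]_(k | PK k) (w k * f k x) + w0 * f0 x))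
  <= \big[Rplus/0]_(k | PK k) (w k * ln (\big[Rplus/0]_(x | P x) exp (f k x)))
     + w0 * ln (\big[Rplus/0]_(x | P x) exp (f0 x)).
Proof.
move=> Px0 wpos w0pos wsum.
set g := fun x => \big[Rplus/0]_(k | PK k) (w k * f k x) + w0 * f0 x.
have [Heq [qpos qsum]] := gibbs_eq g Px0.
set Z := \big[Rplus/0]_(x | P x) exp (g x) in Heq qpos qsum *.
pose q := fun x => exp (g x) / Z.
change (\big[Rplus/0]_(x | P x) (q x * (g x - ln (q x))) = ln Z) in Heq.
change (forall x, P x -> 0 < q x) in qpos.
change (\big[Rplus/0]_(x | P x) q x = 1) in qsum.
rewrite -Heq.
have e : forall x, P x -> q x * (g x - ln (q x)) =
   \big[Rplus/0]_(k | PK k) (w k * (q x * (f k x - ln (q x)))) + w0 * (q x * (f0 x - ln (q x))).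
  move=> x _; rewrite /g.
  have -> : \big[Rplus/0]_(k | PK k) (w k * (q x * (f k x - ln (q x)))) =
     q x * (\big[Rplus/0]_(k | PK k) (w k * f k x)) - q x * ln (q x) * \big[Rplus/0]_(k | PK k) w k.
    rewrite big_distrr big_distrr -sumR_sub /=; apply: eq_bigr => k _; ring.
  have -> : \big[Rplus/0]_(k | PK k) w k = 1 - w0 by lra.
  ring.
rewrite (eq_bigr _ e) sumR_split exchange_big /=.
rewrite -big_distrr /=.
apply: Rplus_le_compat.
  apply: sumR_le => k Pk; rewrite -big_distrr /=.
  apply: Rmult_le_compat_l; first exact: wpos.
  exact: gibbs_le.
apply: Rmult_le_compat_l => //; exact: gibbs_le.
Qed.
End Gibbs.
Set Implicit Arguments.
Unset Strict Implicit.

Section Main.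
Variables (V E T : finType) (src dst : E -> V) (nL : nat) (VT : T -> {set V}) (ET : T -> {set E})
  (phi : E -> Lab nL -> Lab nL -> R) (gamma : R).
Hypothesis gpos : 0 < gamma.

Local Notation en := (energy src dst VT ET phi).
Local Notation lab := (labeling_of VT).
Local Notation marg := (smax_marginal src dst VT ET phi gamma).
Local Notation nu := (smax_energy src dst VT ET phi gamma).

Lemma lab_ex t i (l : Lab nL) : i \in VT t ->
  lab t [ffun j => if j == i then l else ord0] && ([ffun j => if j == i then l else ord0] i == l).
Proof.
move=> Hi; apply/andP; split; last by rewrite ffunE eqxx.
apply/forallP => j; rewrite ffunE; apply/implyP => Hj.
case: (j =P i) => [E1|]; last by []. by subst j; rewrite Hi in Hj.
Qed.

Lemma lse_shift ps t i (c : Lab nL -> R) : i \in VT t ->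
  ln (\big[Rplus/0]_(x | lab t x) exp (en ps t x / gamma + c (x i)))
  = ln (\big[Rplus/0]_(l : Lab nL) exp (marg ps t i l / gamma + c l)).
Proof.
move=> Hi; congr ln.
rewrite (partition_big (fun x : {ffun V -> Lab nL} => x i) predT) //=.
apply: eq_bigr => l _.
set S := \big[Rplus/0]_(x | lab t x && (x i == l)) exp (en ps t x / gamma).
have Spos : 0 < S.
  apply: (@sumR_gt0 _ _ _ [ffun j => if j == i then l else ord0]); first exact: lab_ex.
  move=> x _; exact: exp_pos.
rewrite /smax_marginal -/S.
have -> : gamma * ln S / gamma = ln S by field; lra.
rewrite exp_plus exp_ln // /S big_distrl /=.
apply: eq_bigr => x /andP[_ /eqP <-]; by rewrite exp_plus.
Qed.

Lemma nu_lse ps t i : i \in VT t ->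
  nu ps t / gamma = ln (\big[Rplus/0]_(l : Lab nL) exp (marg ps t i l / gamma)).
Proof.
move=> Hi; have := lse_shift ps (fun _ => 0) Hi.
under eq_bigr do rewrite Rplus_0_r.
under [in X in _ = X -> _]eq_bigr do rewrite Rplus_0_r.
move=> <-; rewrite /smax_energy; field; lra.
Qed.


Lemma exch (F : T -> V -> R) :
  \big[Rplus/0]_(t : T) \big[Rplus/0]_(k in VT t) F t k
  = \big[Rplus/0]_(k : V) \big[Rplus/0]_(t in Tof VT k) F t k.
Proof.
rewrite (exchange_big_dep predT) //=; apply: eq_bigr => k _; apply: eq_bigl => t.
by rewrite in_set.
Qed.

Lemma V0_ge t : INR #|VT t| <= INR (V0size VT).
Proof. apply: le_INR; apply/leP; rewrite /V0size; exact: (@leq_bigmax T (fun t => #|VT t|) t). Qed.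

Lemma main_le ps : tree_decomposition src dst VT ET ->
  dual_obj src dst VT ET phi gamma (updated src dst VT ET phi gamma ps)
  <= dual_obj src dst VT ET phi gamma ps.
Proof.
move=> [Htree Hedges Hcov Huniq].
set N := INR (V0size VT).
have card_ge1 : forall t, 1 <= INR #|VT t|.
  move=> t; have [H1 _ _] := Htree t; change 1 with (INR 1); apply: le_INR; exact/leP.
have Npos : forall t : T, 0 < N.
  move=> t; have := V0_ge t; have := card_ge1 t; rewrite -/N; lra.
have Tpos : forall k, 0 < INR #|Tof VT k|.
  move=> k; apply: lt_0_INR; apply/ltP; have [t Ht] := Hcov k.
  by apply/card_gt0P; exists t; rewrite in_set.
set L := fun t => nu ps t / gamma.
set L' := fun t => nu (updated src dst VT ET phi gamma ps) t / gamma.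
set A := fun k l => / INR #|Tof VT k| * \big[Rplus/0]_(tb in Tof VT k) marg ps tb k l.
set C := fun k => \big[Rplus/0]_(tb in Tof VT k) (/ INR #|Tof VT k| * L tb).
have stepB : forall k, ln (\big[Rplus/0]_(l : Lab nL) exp (A k l / gamma)) <= C k.
  move=> k.
  have Tk := Tpos k.
  have := @jensen_lse (Lab nL) predT T (mem (Tof VT k)) (fun _ => / INR #|Tof VT k|) 0
     (fun tb l => marg ps tb k l / gamma) (fun _ => 0) ord0 isT.
  move=> J.
  have J' := J (fun tb _ => Rlt_le _ _ (Rinv_0_lt_compat _ Tk)) (Rle_refl 0).
  rewrite sumR_const in J'.
  have := J' ltac:(field; lra).
  rewrite Rmult_0_l; under eq_bigr do rewrite Rplus_0_r.
  have -> : \big[Rplus/0]_(k0 in Tof VT k) (/ INR #|Tof VT k| *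
       ln (\big[Rplus/0]_(x | predT x) exp (marg ps k0 k x / gamma))) = C k.
    apply: eq_bigr => tb; rewrite in_set => Hk; rewrite /L (nu_lse ps Hk) //.
  rewrite Rmult_0_l Rplus_0_r => J2; apply: (Rle_trans _ _ _ _ J2); right; congr ln; apply: eq_bigr => l _; congr exp.
  rewrite /A /Rdiv Rmult_assoc big_distrl /= big_distrr /=; by apply: eq_bigr.
have step1 : forall t, L' t <= \big[Rplus/0]_(k in VT t) (/ N * C k)
                           + (1 - INR #|VT t| / N) * L t.
  move=> t.
  have Nt := Npos t.
  have Vt : INR #|VT t| <= N := V0_ge t.
  set w0 := 1 - INR #|VT t| / N.
  set f := fun k (x : {ffun V -> Lab nL}) => en ps t x / gamma + (A k (x k) - marg ps t k (x k)) / gamma.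
  have lab0 : lab t ([ffun => (ord0 : Lab nL)] : {ffun V -> Lab nL}).
    by apply/forallP => j; rewrite ffunE; apply/implyP.
  have := @jensen_lse _ (lab t) V (mem (VT t)) (fun _ => / N) w0 f
     (fun x => en ps t x / gamma) _ lab0.
  move=> J.
  have J' := J (fun _ _ => Rlt_le _ _ (Rinv_0_lt_compat _ Nt)).
  have w0pos : 0 <= w0.
    rewrite /w0; have : INR #|VT t| / N <= 1.
      apply: (Rmult_le_reg_r N) => //; rewrite /Rdiv Rmult_assoc Rinv_l; lra.
    lra.
  have J2 := J' w0pos.
  rewrite sumR_const in J2.
  have := J2 ltac:(rewrite /w0; field; lra).
  move=> {J J' J2} J.
  have EQ : L' t = ln (\big[Rplus/0]_(x | lab t x) exp (\big[Rplus/0]_(k | mem (VT t) k) (/ N * f k x) +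
                w0 * (en ps t x / gamma))).
    rewrite /L' /smax_energy.
    have -> : forall z, gamma * z / gamma = z by move=> z; field; lra.
    congr ln; apply: eq_bigr => x _; congr exp.
    have H1 : en (updated src dst VT ET phi gamma ps) t x = en ps t x -
        \big[Rplus/0]_(i in VT t) (/ N * (marg ps t i (x i) - A i (x i))).
      rewrite /energy.
      rewrite (_ : \big[Rplus/0]_(i in VT t) updated src dst VT ET phi gamma ps t i (x i) =
        \big[Rplus/0]_(i in VT t) (ps t i (x i) - / N * (marg ps t i (x i) - A i (x i)))) //.
      rewrite sumR_sub /Rminus !Rplus_assoc; congr Rplus; apply: Rplus_comm.
    have H2 : \big[Rplus/0]_(k | mem (VT t) k) (/ N * f k x) =
        INR #|VT t| * (/ N * (en ps t x / gamma)) +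
        (- \big[Rplus/0]_(i in VT t) (/ N * (marg ps t i (x i) - A i (x i)))) / gamma.
      rewrite /f; under eq_bigr do rewrite Rmult_plus_distr_l.
      rewrite sumR_split sumR_const; congr (_ + _).
      rewrite /Rdiv -sumR_opp big_distrl /=; apply: eq_bigr => k _; move: (A k (x k)) (marg ps t k (x k)) => a m; ring.
    rewrite H2 H1 /w0; field; lra.
  rewrite EQ; apply: (Rle_trans _ _ _ J); apply: Rplus_le_compat; last first.
    by right; congr (_ * _); rewrite /L /smax_energy; field; lra.
  apply: sumR_le => k Hk; apply: Rmult_le_compat_l.
    by apply: Rlt_le; apply: Rinv_0_lt_compat.
  apply: (Rle_trans _ _ _ _ (stepB k)); right.
  rewrite /f; have := lse_shift ps (fun l => (A k l - marg ps t k l) / gamma) Hk.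
  move=> ->; congr ln; apply: eq_bigr => l _; congr exp; field; lra.
have step2 : \big[Rplus/0]_(t : T) (\big[Rplus/0]_(k in VT t) (/ N * C k)
                           + (1 - INR #|VT t| / N) * L t) = \big[Rplus/0]_(t : T) L t.
  rewrite sumR_split.
  have S1 : \big[Rplus/0]_(t : T) \big[Rplus/0]_(k in VT t) (/ N * C k)
            = / N * \big[Rplus/0]_(t : T) (INR #|VT t| * L t).
    rewrite exch.
    transitivity (\big[Rplus/0]_(k : V) (/ N * \big[Rplus/0]_(t in Tof VT k) L t)).
      apply: eq_bigr => k _; rewrite sumR_const /C -big_distrr /=.
      have := Tpos k; move: (INR _) => c cpos.
      move: (\big[Rplus/0]_(t in Tof VT k) L t) => s; have [t0 _] := Hcov k; have := Npos t0; move=> Np; field; lra.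
    rewrite -big_distrr /=; congr (_ * _).
    rewrite -(exch (fun t k => L t)); apply: eq_bigr => t _; by rewrite sumR_const.
  rewrite S1 big_distrr /= -sumR_split; apply: eq_bigr => t _.
  have := Npos t; move: (L t) (INR _) => a b Np; field; lra.
have HL : forall t, nu ps t = gamma * L t by move=> t; rewrite /L; field; lra.
have HL' : forall t, nu (updated src dst VT ET phi gamma ps) t = gamma * L' t
  by move=> t; rewrite /L'; field; lra.
rewrite /dual_obj (eq_bigr _ (fun t _ => HL' t)) (eq_bigr _ (fun t _ => HL t)).
rewrite -!big_distrr /=; apply: Rmult_le_compat_l; first lra.
rewrite -step2; exact: sumR_le.
Qed.

End Main.

Unset Implicit Arguments.
Set Strict Implicit.

Theorem theorem2 (V E T : finType) (src dst : E -> V) (nL : nat)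
  (VT : T -> {set V}) (ET : T -> {set E})
  (psi : V -> Lab nL -> R) (phi : E -> Lab nL -> Lab nL -> R)
  (gamma : R) (psit : T -> V -> Lab nL -> R) :
  tree_decomposition src dst VT ET ->
  0 < gamma ->
  feasible VT psi psit ->
  feasible VT psi (updated src dst VT ET phi gamma psit) /\
  dual_obj src dst VT ET phi gamma (updated src dst VT ET phi gamma psit)
    <= dual_obj src dst VT ET phi gamma psit.
Proof.
move=> Htd gpos Hf; split; last exact: main_le.
move=> i l; rewrite /updated sumR_sub Hf -big_distrr /= sumR_sub sumR_const.
have [t Ht] : exists t, i \in VT t by case: Htd => _ _ H _; exact: H.
have cpos : 0 < INR #|Tof VT i|.
  apply: lt_0_INR; apply/ltP; apply/card_gt0P; exists t; by rewrite in_set.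
move: cpos; move: (INR #|Tof VT i|) => c cpos.
move: (\big[Rplus/0]_(i0 in Tof VT i) smax_marginal src dst VT ET phi gamma psit i0 i l) => s.
have -> : c * (/ c * s) = s by field; lra.
replace (s - s) with 0 by ring; rewrite Rmult_0_r; ring.
Qed.
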